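(* Let $N, B$ be positive integers with $B$ dividing $N$, and $\lambda>0$. Consider all assignment vectors $\bar N=(N_1,\dots,N_B)$ of positive integers with $\sum_{i=1}^B N_i = N$. For each, let $T_1,\dots,T_B$ be independent with $T_i\sim \mathrm{Exp}(N_i\lambda)$ and $T(\bar N)=\max(T_1,\dots,T_B)$. Then the balanced assignment $\bar N_b = (N/B,\dots,N/B)$ minimizes $\mathbb{E}[T(\bar N)]$ over all such assignments, i.e. $\mathbb{E}[T(\bar N)] \ge \mathbb{E}[T(\bar N_b)]$ for every such $\bar N$.
   Context: Interpretation: a data set is split into $B$ disjoint batches, batch $i$ is replicated on $N_i$ of the $N$ workers (each worker hosts exactly one batch); worker service times are i.i.d. $\mathrm{Exp}(\lambda)$; batch $i$ is recovered when the fastest of its $N_i$ workers finishes, and the overall result is available when all batches are recovered, at time $T(\bar N)$. *)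

(* Defs.v *)
From Stdlib Require Import Reals Lra List.
Open Scope R_scope.

Definition exp_cdf (rate t : R) : R := 1 - exp (- rate * t).

(* CDF of T(Nbar) = max_i T_i with T_i ~ Exp(N_i * lambda) independent:
   P(T <= t) = prod_i P(T_i <= t). *)
Definition max_exp_cdf (lam : R) (Nbar : list nat) (t : R) : R :=
  fold_right (fun n acc => exp_cdf (INR n * lam) t * acc) 1 Nbar.

Definition improper_integral_0_infty (f : R -> R) (l : R) : Prop :=
  forall eps : R, eps > 0 ->
    exists M : R, forall b : R, b >= M -> b >= 0 /\
      exists pr : Riemann_integrable f 0 b, Rabs (RiemannInt pr - l) < eps.

(* E[T(Nbar)] = l, via E[T] = int_0^oo P(T > t) dt for a nonnegative T. *)
Definition expected_max_exp (lam : R) (Nbar : list nat) (l : R) : Prop :=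
  improper_integral_0_infty (fun t => 1 - max_exp_cdf lam Nbar t) l.

Definition assignment (N B : nat) (Nbar : list nat) : Prop :=
  length Nbar = B /\ Forall (fun n => (0 < n)%nat) Nbar /\ fold_right Nat.add 0%nat Nbar = N.

Definition balanced (N B : nat) : list nat := repeat (N / B)%nat B.

(* Main.v *)
Require Import Defs.
From Stdlib Require Import Reals Lra List Lia Classical Arith.
From Coquelicot Require Import Coquelicot.
Open Scope R_scope.

Lemma exp_INR_mult (n : nat) (y : R) : exp (INR n * y) = exp y ^ n.
Proof.
  induction n as [|n IH].
  - simpl; rewrite Rmult_0_l; apply exp_0.
  - rewrite S_INR, Rmult_plus_distr_r, exp_plus, IH, Rmult_1_l; simpl; ring.
Qed.

Lemma pow_le_1 (x : R) (m : nat) : 0 <= x <= 1 -> 0 <= x ^ m <= 1.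
Proof.
  intros Hx; induction m as [|m IH]; simpl; [lra|].
  split; [apply Rmult_le_pos; lra| nra].
Qed.

Lemma pow_anti (x : R) (m p : nat) : 0 <= x <= 1 -> (m <= p)%nat -> x ^ p <= x ^ m.
Proof.
  intros Hx Hmp. replace p with (m + (p - m))%nat by lia.
  rewrite pow_add. pose proof (pow_le_1 x m Hx). pose proof (pow_le_1 x (p-m) Hx). nra.
Qed.

Lemma mono_ratio (x : R) (m p : nat) : 0 <= x <= 1 -> (m <= p)%nat ->
  (1 - x ^ S p) * (1 - x ^ m) <= (1 - x ^ S m) * (1 - x ^ p).
Proof.
  intros Hx Hmp. simpl.
  pose proof (pow_anti x m p Hx Hmp).
  pose proof (pow_le_1 x m Hx). pose proof (pow_le_1 x p Hx).
  assert (0 <= (x^m - x^p) * (1 - x)) by (apply Rmult_le_pos; lra). nra.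
Qed.

Lemma seq_key (a : nat -> R) (r : R) (k : nat) : r > 0 -> (forall m, 0 <= a m) ->
  (forall m, (k <= m)%nat -> a (S m) <= r * a m) ->
  (forall m, (m < k)%nat -> r * a m <= a (S m)) ->
  forall n, a n * r ^ k <= a k * r ^ n.
Proof.
  intros Hr Ha H1 H2 n.
  assert (Hrp : forall j, 0 < r ^ j) by (intro; apply pow_lt; lra).
  destruct (le_lt_dec k n) as [Hkn|Hnk].
  - assert (Hj : forall j, a (k + j)%nat <= a k * r ^ j).
    { induction j as [|j IH].
      - rewrite Nat.add_0_r; simpl; lra.
      - replace (k + S j)%nat with (S (k + j)) by lia.
        eapply Rle_trans; [apply H1; lia|]. simpl.
        pose proof (Ha (k+j)%nat). nra. }
    replace n with (k + (n - k))%nat at 1 by lia.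
    replace n with ((n - k) + k)%nat at 2 by lia.
    rewrite pow_add. specialize (Hj (n - k)%nat). specialize (Hrp k). nra.
  - assert (Hj : forall j, (n + j <= k)%nat -> a n * r ^ j <= a (n + j)%nat).
    { induction j as [|j IH]; intros Hle.
      - rewrite Nat.add_0_r; simpl; lra.
      - replace (n + S j)%nat with (S (n + j)) by lia.
        eapply Rle_trans; [|apply H2; lia]. simpl.
        specialize (IH ltac:(lia)). nra. }
    replace k with ((k - n) + n)%nat at 1 by lia.
    rewrite pow_add. specialize (Hj (k - n)%nat ltac:(lia)).
    replace (n + (k - n))%nat with k in Hj by lia. specialize (Hrp n). nra.
Qed.

Definition prodA (a : nat -> R) (l : list nat) : R := fold_right (fun n acc => a n * acc) 1 l.

Lemma prodA_nonneg a l : (forall m, 0 <= a m) -> 0 <= prodA a l.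
Proof. intros Ha; induction l; simpl; [lra|]. apply Rmult_le_pos; auto. Qed.

Lemma prodA_key (a : nat -> R) (r : R) (k : nat) (l : list nat) : r > 0 -> (forall m, 0 <= a m) ->
  (forall n, a n * r ^ k <= a k * r ^ n) ->
  prodA a l * r ^ (k * length l) <= a k ^ length l * r ^ (fold_right Nat.add 0%nat l).
Proof.
  intros Hr Ha Hk. induction l as [|n l IH]; simpl.
  - rewrite Nat.mul_0_r; simpl; lra.
  - rewrite Nat.mul_succ_r, !pow_add.
    pose proof (prodA_nonneg a l Ha).
    assert (0 <= r ^ (k * length l)) by (apply pow_le; lra).
    assert (0 <= r ^ k) by (apply pow_le; lra).
    assert (0 <= a n * r ^ k) by (apply Rmult_le_pos; auto).
    assert (0 <= prodA a l * r ^ (k * length l)) by (apply Rmult_le_pos; auto).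
    specialize (Hk n).
    replace (a n * prodA a l * (r ^ (k * length l) * r ^ k)) with
      ((a n * r ^ k) * (prodA a l * r ^ (k * length l))) by ring.
    replace (a k * a k ^ length l * (r ^ n * r ^ fold_right Nat.add 0%nat l)) with
      ((a k * r ^ n) * (a k ^ length l * r ^ fold_right Nat.add 0%nat l)) by ring.
    apply Rmult_le_compat; auto.
Qed.

Lemma prod_pointwise (x : R) (k : nat) (l : list nat) : 0 < x < 1 -> (0 < k)%nat ->
  fold_right Nat.add 0%nat l = (k * length l)%nat ->
  prodA (fun m => 1 - x ^ m) l <= (1 - x ^ k) ^ length l.
Proof.
  intros Hx Hk Hs.
  set (a := fun m => 1 - x ^ m).
  assert (Ha : forall m, 0 <= a m) by (intro m; unfold a; pose proof (pow_le_1 x m ltac:(lra)); lra).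
  assert (Hak : 0 < a k).
  { unfold a. destruct k as [|k]; [lia|]. simpl.
    pose proof (pow_le_1 x k ltac:(lra)). nra. }
  assert (Hak1 : 0 < a (S k)).
  { unfold a. simpl. pose proof (pow_le_1 x k ltac:(lra)). nra. }
  set (r := a (S k) / a k).
  assert (Hr : r > 0) by (unfold r; apply Rdiv_lt_0_compat; lra).
  assert (Hkey := seq_key a r k Hr Ha).
  assert (Hkey2 : forall n, a n * r ^ k <= a k * r ^ n).
  { apply Hkey.
    - intros m Hm. unfold r. apply (Rmult_le_reg_r (a k)); auto.
      field_simplify; [|lra]. unfold a.
      assert (H := mono_ratio x k m ltac:(lra) Hm). lra.
    - intros m Hm. unfold r. apply (Rmult_le_reg_r (a k)); auto.
      field_simplify; [|lra]. unfold a.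
      assert (H := mono_ratio x m k ltac:(lra) ltac:(lia)). lra. }
  pose proof (prodA_key a r k l Hr Ha Hkey2) as H. rewrite Hs in H.
  assert (0 < r ^ (k * length l)) by (apply pow_lt; lra).
  apply (Rmult_le_reg_r (r ^ (k * length l))); auto.
Qed.

Lemma max_exp_prodA lam l t :
  max_exp_cdf lam l t = prodA (fun m => 1 - exp (- lam * t) ^ m) l.
Proof.
  induction l as [|n l IH]; simpl; auto.
  rewrite IH. unfold exp_cdf.
  replace (- (INR n * lam) * t) with (INR n * (- lam * t)) by ring.
  rewrite exp_INR_mult. reflexivity.
Qed.

Lemma prodA_repeat a k B : prodA a (repeat k B) = a k ^ B.
Proof. induction B; simpl; auto. rewrite IHB; auto. Qed.

Lemma cont_max lam l t : continuous (max_exp_cdf lam l) t.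
Proof.
  induction l as [|n l IH]; simpl.
  - apply continuous_const.
  - apply (continuous_mult (fun t => exp_cdf (INR n * lam) t) (max_exp_cdf lam l)); auto.
    apply (@ex_derive_continuous R_AbsRing R_NormedModule). unfold exp_cdf. auto_derive. auto.
Qed.

Lemma prodA_bound (x : R) l : 0 < x <= 1 -> List.Forall (fun n => (0 < n)%nat) l ->
  0 <= prodA (fun m => 1 - x ^ m) l <= 1 /\ 1 - prodA (fun m => 1 - x ^ m) l <= INR (length l) * x.
Proof.
  intros Hx Hl; induction Hl as [|n l Hn Hl IH].
  - simpl; lra.
  - destruct IH as [[H0 H1] H2].
    pose proof (pow_le_1 x n ltac:(lra)).
    assert (x ^ n <= x) by (rewrite <- (pow_1 x) at 2; apply pow_anti; [lra|lia]).
    change (prodA (fun m => 1 - x^m) (n::l)) with ((1 - x^n) * prodA (fun m => 1 - x^m) l).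
    change (length (n :: l)) with (S (length l)).
    rewrite S_INR. split; [split|]; nra.
Qed.

Lemma g_bound lam l t : 0 < lam -> 0 <= t -> List.Forall (fun n => (0 < n)%nat) l ->
  0 <= 1 - max_exp_cdf lam l t <= INR (length l) * exp (- lam * t).
Proof.
  intros Hlam Ht Hl. rewrite max_exp_prodA.
  assert (0 < exp (- lam * t) <= 1).
  { split; [apply exp_pos|]. rewrite <- exp_0. destruct (Req_dec t 0) as [->|Ht0]; [rewrite Rmult_0_r; lra| apply Rlt_le, exp_increasing; nra]. }
  destruct (prodA_bound (exp (- lam * t)) l H Hl) as [[H0 H1] H2]. lra.
Qed.

Lemma int_exp_bound (lam C b : R) : 0 < lam -> 0 <= C -> 0 <= b ->
  RInt (fun t => C * exp (- lam * t)) 0 b <= C / lam.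
Proof.
  intros Hlam HC Hb.
  assert (H : is_RInt (fun t => C * exp (- lam * t)) 0 b
     (minus ((fun t => - C / lam * exp (- lam * t)) b) ((fun t => - C / lam * exp (- lam * t)) 0))).
  { apply (@is_RInt_derive R_CompleteNormedModule (fun t => - C / lam * exp (- lam * t))).
    - intros x _. auto_derive; auto. field. lra.
    - intros x _. apply (@ex_derive_continuous R_AbsRing R_NormedModule). auto_derive. auto. }
  rewrite (is_RInt_unique _ _ _ _ H). simpl. unfold minus, plus, opp; simpl.
  replace (- lam * 0) with 0 by ring. rewrite exp_0.
  pose proof (exp_pos (- lam * b)).
  unfold Rdiv. assert (0 <= C * / lam) by (apply Rmult_le_pos; [lra| apply Rlt_le, Rinv_0_lt_compat; lra]).
  replace (- C * / lam * exp (- lam * b) + - (- C * / lam * 1)) with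
     (C * / lam - (C * / lam) * exp (- lam * b)) by ring.
  nra.
Qed.

Lemma improper_exists (lam : R) (g : R -> R) (C : R) : 0 < lam ->
  (forall t, continuous g t) ->
  (forall t, 0 <= t -> 0 <= g t <= C * exp (- lam * t)) ->
  exists l, improper_integral_0_infty g l.
Proof.
  intros Hlam Hc Hg.
  assert (HC : 0 <= C).
  { destruct (Hg 0 (Rle_refl 0)) as [_ H]. rewrite Rmult_0_r, exp_0 in H.
    destruct (Hg 0 (Rle_refl 0)). lra. }
  assert (Hex : forall a b, ex_RInt g a b) by (intros; apply (@ex_RInt_continuous R_CompleteNormedModule); auto).
  assert (Hmono : forall b1 b2, 0 <= b1 <= b2 -> RInt g 0 b1 <= RInt g 0 b2).
  { intros b1 b2 Hb. rewrite <- (@RInt_Chasles R_CompleteNormedModule g 0 b1 b2); auto.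
    pose proof (RInt_ge_0 g b1 b2 ltac:(lra) (Hex _ _) ltac:(intros x Hx; apply Hg; lra)).
    simpl. unfold plus; simpl. lra. }
  assert (Hbd : forall b, 0 <= b -> RInt g 0 b <= C / lam).
  { intros b Hb. eapply Rle_trans; [|apply (int_exp_bound lam C b); auto].
    apply RInt_le; auto.
    - apply (@ex_RInt_continuous R_CompleteNormedModule). intros z _.
      apply (@ex_derive_continuous R_AbsRing R_NormedModule). auto_derive. auto.
    - intros x Hx. apply Hg; lra. }
  set (E := fun y => exists b, 0 <= b /\ y = RInt g 0 b).
  assert (HE1 : bound E).
  { exists (C / lam). intros y [b [Hb ->]]. auto. }
  assert (HE2 : exists y, E y) by (exists (RInt g 0 0); exists 0; split; [lra|auto]).
  destruct (completeness E HE1 HE2) as [m [Hub Hlub]].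
  exists m. intros eps Heps.
  assert (Hx : exists b0, 0 <= b0 /\ m - eps < RInt g 0 b0).
  { apply NNPP. intro Hn.
    assert (m <= m - eps); [|lra].
    apply Hlub. intros y [b [Hb ->]].
    apply Rnot_lt_le. intro Hlt. apply Hn. exists b. split; auto. }
  destruct Hx as [b0 [Hb0 Hm]].
  exists b0. intros b Hb. split; [lra|].
  exists (ex_RInt_Reals_0 g 0 b (Hex 0 b)).
  rewrite <- RInt_Reals.
  assert (RInt g 0 b <= m) by (apply Hub; exists b; split; [lra|auto]).
  pose proof (Hmono b0 b ltac:(lra)).
  apply Rabs_def1; lra.
Qed.

Lemma improper_le (g1 g2 : R -> R) (l1 l2 : R) :
  (forall t, 0 < t -> g1 t <= g2 t) ->
  improper_integral_0_infty g1 l1 -> improper_integral_0_infty g2 l2 -> l1 <= l2.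
Proof.
  intros Hle H1 H2.
  apply Rnot_lt_le. intro Hlt.
  set (eps := (l1 - l2) / 2).
  assert (Heps : eps > 0) by (unfold eps; lra).
  destruct (H1 eps Heps) as [M1 HM1]. destruct (H2 eps Heps) as [M2 HM2].
  set (b := Rmax M1 M2).
  destruct (HM1 b (Rle_ge _ _ (Rmax_l M1 M2))) as [Hb [pr1 Hp1]].
  destruct (HM2 b (Rle_ge _ _ (Rmax_r M1 M2))) as [_ [pr2 Hp2]].
  rewrite <- RInt_Reals in Hp1, Hp2.
  assert (RInt g1 0 b <= RInt g2 0 b).
  { apply RInt_le; [lra| apply ex_RInt_Reals_1; auto | apply ex_RInt_Reals_1; auto |].
    intros x Hx; apply Hle; lra. }
  apply Rabs_def2 in Hp1. apply Rabs_def2 in Hp2. unfold eps in *. lra.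
Qed.

Lemma g_cont lam l t : continuous (fun t => 1 - max_exp_cdf lam l t) t.
Proof.
  apply (@continuous_minus R_UniformSpace R_AbsRing R_NormedModule (fun _ => 1) (max_exp_cdf lam l)).
  - apply continuous_const.
  - apply cont_max.
Qed.

Lemma exists_exp lam l : 0 < lam -> List.Forall (fun n => (0 < n)%nat) l ->
  exists v, expected_max_exp lam l v.
Proof.
  intros Hlam Hl. unfold expected_max_exp.
  apply (improper_exists lam _ (INR (length l)) Hlam).
  - apply g_cont.
  - intros t Ht. apply g_bound; auto.
Qed.

Theorem theorem1 (N B : nat) (lam : R)
  (hN : (0 < N)%nat) (hB : (0 < B)%nat) (hdiv : Nat.divide B N) (hlam : 0 < lam) :
  (exists lb, expected_max_exp lam (balanced N B) lb) /\
  forall Nbar : list nat, assignment N B Nbar ->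
    (exists l, expected_max_exp lam Nbar l) /\
    forall l lb, expected_max_exp lam Nbar l ->
      expected_max_exp lam (balanced N B) lb -> lb <= l.
Proof.
  destruct hdiv as [z Hz].
  assert (Hk : (N / B = z)%nat) by (rewrite Hz; apply Nat.div_mul; lia).
  assert (Hz0 : (0 < z)%nat) by (destruct z; lia).
  assert (Hbal : List.Forall (fun n => (0 < n)%nat) (balanced N B)).
  { unfold balanced. rewrite Hk. clear -Hz0. induction B; simpl; constructor; auto. }
  split; [apply exists_exp; auto|].
  intros Nbar [Hlen [Hpos Hsum]]. split; [apply exists_exp; auto|].
  intros l lb Hl Hlb.
  eapply (improper_le _ _ lb l); [|exact Hlb|exact Hl].
  intros t Ht.
  cbv beta. rewrite !max_exp_prodA. unfold balanced. rewrite Hk, prodA_repeat.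
  assert (Hx : 0 < exp (- lam * t) < 1).
  { split; [apply exp_pos|]. rewrite <- exp_0. apply exp_increasing. nra. }
  pose proof (prod_pointwise (exp (- lam * t)) z Nbar Hx Hz0 ltac:(rewrite Hsum, Hlen; lia)).
  rewrite Hlen in H. lra.
Qed.
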